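(* Let $d\ge1$ be fixed, let $P$ be a set of $n\ge2$ points in $\mathbb{R}^d$, let $\varepsilon\in(0,1)$, and let $q\in\mathbb{R}^d$ be a query point. Consider the greedy permutation graph $G$ built with parameter $\varepsilon/4$ and the greedy routing procedure for $q$ run with parameter $\varepsilon/4$, as described in the context. If an edge $p_j\to p_i$ is inspected by the procedure, $d(q,p_j)<d(q,p_i)$, and $r_i<(\varepsilon/8)\,d(q,p_j)$, then $p_j$ is a $(1+\varepsilon)$-approximate nearest neighbor of $q$ in $P$, i.e., $d(q,p_j)\le(1+\varepsilon)\min_{p\in P}d(q,p)$.
   Context: Distances are Euclidean. Greedy permutation: $p_1\in P$ is arbitrary; for $i\ge2$, $p_i$ is a point of $P\setminus P_{i-1}$ furthest from $P_{i-1}=\{p_1,\dots,p_{i-1}\}$. Radii: $r_1=\max_{p\in P}d(p,p_1)$ and $r_{i-1}=d(p_i,P_{i-1})$ for $i\ge2$ (so every point of $P$ is within distance $r_i$ of $P_i$). For a parameter $\delta\in(0,1/2)$, the graph built with parameter $\delta$ has edges $p_j\to p_i$ for all $i\ge2$ and all $p_j\in P_{i-1}$ with $d(p_j,p_i)\le 8r_{i-1}/\delta$; outgoing edges of each vertex are ordered by increasing index of the destination. The greedy routing procedure with parameter $\delta$: set $c=p_1$; scan the outgoing edges $c\to p_j$ in increasing order of $j$, and as soon as $d(q,p_j)\le(1-\delta/4)d(q,c)$, set $c=p_j$ and restart scanning from the new $c$; if all outgoing edges of $c$ are scanned without a move, return $c$. Here $\delta=\varepsilon/4$. *)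

(* Defs.v *)
From HB Require Import structures.
From mathcomp Require Import all_boot all_order all_algebra.
From mathcomp Require Import reals.
Set Implicit Arguments. Unset Strict Implicit. Unset Printing Implicit Defensive.
Import Order.TTheory GRing.Theory Num.Theory.
Local Open Scope ring_scope.

Section Greedy.
Variables (R : realType) (d : nat).
Notation point := 'rV[R]_d.

Definition edist (x y : point) : R :=
  Num.sqrt (\sum_(k < d) (x 0 k - y 0 k) ^+ 2).

(* The points are p 1, ..., p n (1-indexed as in the paper);
   P = {p 1, ..., p n}, P_i = {p 1, ..., p i}. *)
Variables (p : nat -> point) (n : nat).

Definition distP (i : nat) (x : point) : R :=
  \big[Num.min/edist (p 1) x]_(1 <= k < i.+1) edist (p k) x.

(* p is a greedy permutation of the n-point set P = {p 1, ..., p n}: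
   the p k are pairwise distinct, and for 2 <= i <= n, p i is a point of
   P \ P_{i-1} furthest from P_{i-1}  (p 1 arbitrary). *)
Definition greedy_perm : Prop :=
  (forall j k, 1 <= j <= n -> 1 <= k <= n -> p j = p k -> j = k)%N /\
  (forall i k, (2 <= i)%N -> (i <= k <= n)%N ->
      distP i.-1 (p k) <= distP i.-1 (p i)).

(* Radii: r_{i-1} = d(p_i, P_{i-1}) for 2 <= i <= n (this also equals r_1 =
   max_p d(p, p_1) for a greedy permutation); convention r_n = 0 (every point
   of P = P_n is within distance 0 of P_n). *)
Definition radius (i : nat) : R :=
  if (i < n)%N then distP i (p i.+1) else 0.

Variable delta : R.

Definition gedge (j i : nat) : Prop :=
  (2 <= i <= n)%N /\ (1 <= j < i)%N /\
  edist (p j) (p i) <= 8 * radius i.-1 / delta.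

Variable q : point.

Definition improving (c k : nat) : Prop :=
  edist q (p k) <= (1 - delta / 4) * edist q (p c).

(* Vertices that become the current vertex c during the greedy routing
   procedure: start at p 1; from c, the scan (in increasing destination
   index) moves to the first out-neighbour k that is improving. *)
Inductive visited : nat -> Prop :=
| visited_start : visited 1
| visited_step c k : visited c -> gedge c k -> improving c k ->
    (forall k', (k' < k)%N -> gedge c k' -> ~ improving c k') -> visited k.

Definition inspected (c i : nat) : Prop :=
  visited c /\ gedge c i /\
  (forall k', (k' < i)%N -> gedge c k' -> ~ improving c k').

End Greedy.

(* Main.v *)
Require Import Defs.
From HB Require Import structures.
From mathcomp Require Import all_boot all_order all_algebra.
From mathcomp Require Import reals.
From mathcomp Require Import ring lra.
Import Order.TTheory GRing.Theory Num.Theory.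
Local Open Scope ring_scope.
Set Implicit Arguments. Unset Strict Implicit. Unset Printing Implicit Defensive.

Section Aux.
Variable R : realType.

Lemma cs_ineq (d : nat) (a b : 'I_d -> R) :
  (\sum_k a k * b k) ^+ 2 <= (\sum_k a k ^+ 2) * (\sum_k b k ^+ 2).
Proof.
set A := \sum_k a k ^+ 2; set B := \sum_k b k ^+ 2; set C := \sum_k a k * b k.
have A0 : 0 <= A by apply: sumr_ge0 => k _; exact: sqr_ge0.
have B0 : 0 <= B by apply: sumr_ge0 => k _; exact: sqr_ge0.
have E1 : 0 <= B * (A * B - C ^+ 2).
  have -> : B * (A * B - C ^+ 2) = \sum_k (B * a k - C * b k) ^+ 2.
    have -> : \sum_k (B * a k - C * b k) ^+ 2 = \sum_k ((B ^+ 2) * a k ^+ 2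
       - (2 * B * C) * (a k * b k) + C ^+ 2 * b k ^+ 2).
      by apply: eq_bigr => k _; ring.
    rewrite big_split /= sumrB -!mulr_sumr -/A -/B -/C; ring.
  by apply: sumr_ge0 => k _; exact: sqr_ge0.
have E2 : 0 <= A * (A * B - C ^+ 2).
  have -> : A * (A * B - C ^+ 2) = \sum_k (A * b k - C * a k) ^+ 2.
    have -> : \sum_k (A * b k - C * a k) ^+ 2 = \sum_k ((A ^+ 2) * b k ^+ 2
       - (2 * A * C) * (a k * b k) + C ^+ 2 * a k ^+ 2).
      by apply: eq_bigr => k _; ring.
    rewrite big_split /= sumrB -!mulr_sumr -/A -/B -/C; ring.
  by apply: sumr_ge0 => k _; exact: sqr_ge0.
have F1 : 2 * C <= A + B.
  have : \sum_k (2 * (a k * b k)) <= \sum_k (a k ^+ 2 + b k ^+ 2).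
    apply: ler_sum => k _; rewrite -subr_ge0.
    have -> : a k ^+ 2 + b k ^+ 2 - 2 * (a k * b k) = (a k - b k) ^+ 2 by ring.
    exact: sqr_ge0.
  by rewrite -mulr_sumr big_split.
have F2 : - (2 * C) <= A + B.
  have : \sum_k (- (2 * (a k * b k))) <= \sum_k (a k ^+ 2 + b k ^+ 2).
    apply: ler_sum => k _; rewrite -subr_ge0.
    have -> : a k ^+ 2 + b k ^+ 2 - - (2 * (a k * b k)) = (a k + b k) ^+ 2 by ring.
    exact: sqr_ge0.
  by rewrite sumrN -mulr_sumr big_split.
have [AB0|AB0] := eqVneq (A + B) 0.
  have -> : A = 0 by lra.
  have -> : B = 0 by lra.
  have -> : C = 0 by lra.
  by rewrite expr2 !mul0r.
have hAB : 0 < A + B by rewrite lt_def AB0 addr_ge0.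
have : 0 <= (A + B) * (A * B - C ^+ 2) by rewrite mulrDl; exact: addr_ge0.
rewrite pmulr_rge0 // subr_ge0 //.
Qed.

Variable d : nat.
Notation point := 'rV[R]_d.

Lemma edist_sym (x y : point) : edist x y = edist y x.
Proof.
rewrite /edist; congr (Num.sqrt _); apply: eq_bigr => k _.
by rewrite -sqrrN opprB.
Qed.

Lemma edist_ge0 (x y : point) : 0 <= edist x y.
Proof. exact: sqrtr_ge0. Qed.

Lemma edist_xx (x : point) : edist x x = 0.
Proof.
rewrite /edist big1 ?sqrtr0 // => k _; by rewrite subrr expr2 mul0r.
Qed.

Lemma edist_tri (x y z : point) : edist x z <= edist x y + edist y z.
Proof.
rewrite /edist.
set a := fun k : 'I_d => x 0 k - y 0 k.
set b := fun k : 'I_d => y 0 k - z 0 k.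
have A0 : 0 <= \sum_k a k ^+ 2 by apply: sumr_ge0 => k _; exact: sqr_ge0.
have B0 : 0 <= \sum_k b k ^+ 2 by apply: sumr_ge0 => k _; exact: sqr_ge0.
have -> : \sum_k (x 0 k - z 0 k) ^+ 2 =
   \sum_k a k ^+ 2 + \sum_k b k ^+ 2 + 2 * \sum_k a k * b k.
  rewrite mulr_sumr -!big_split /=; apply: eq_bigr => k _.
  rewrite /a /b; ring.
set A := \sum_k a k ^+ 2; set B := \sum_k b k ^+ 2; set C := \sum_k a k * b k.
have hC : C <= Num.sqrt A * Num.sqrt B.
  rewrite -sqrtrM //; apply: le_trans (ler_norm C) _.
  rewrite -sqrtr_sqr; apply: ler_wsqrtr; exact: cs_ineq.
have hs : 0 <= Num.sqrt A + Num.sqrt B by apply: addr_ge0; exact: sqrtr_ge0.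
rewrite -(ger0_norm hs) -sqrtr_sqr; apply: ler_wsqrtr.
rewrite sqrrD !sqr_sqrtr //; lra.
Qed.

Variables (p : nat -> point).

Lemma distP_att (i : nat) (x : point) : (1 <= i)%N ->
  exists k, (1 <= k <= i)%N /\ distP p i x = edist (p k) x.
Proof.
move=> hi; rewrite /distP big_seq.
apply: (big_ind (fun v => exists k, (1 <= k <= i)%N /\ v = edist (p k) x)).
- by exists 1%N; rewrite hi.
- move=> u v [k1 [h1 ->]] [k2 [h2 ->]]; rewrite minEle.
  by case: ifP => _; [exists k1 | exists k2].
- move=> k; rewrite mem_index_iota => hk; exists k; split => //.
Qed.

Lemma bigmin_le_seq (r : seq nat) (F : nat -> R) (idx : R) (k : nat) :
  k \in r -> \big[Num.min/idx]_(j <- r) F j <= F k.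
Proof.
elim: r => [|a r IH] //; rewrite in_cons big_cons /= ge_min.
case/orP => [/eqP ->|h]; first by rewrite lexx.
by rewrite IH // orbT.
Qed.

Lemma distP_le (i k : nat) (x : point) : (1 <= k <= i)%N ->
  distP p i x <= edist (p k) x.
Proof.
move=> hk; apply: bigmin_le_seq; rewrite mem_index_iota.
by case/andP: hk => -> /= h; rewrite ltnS.
Qed.

End Aux.

Section Main.
Variables (R : realType) (d : nat).
Notation point := 'rV[R]_d.

Lemma key (p : nat -> point) n (eps : R) q (c m s : nat) :
  0 < eps < 1 -> greedy_perm p n ->
  (1 <= c < m)%N -> (m <= n)%N -> (1 <= s <= n)%N ->
  0 < edist q (p c) ->
  (1 + eps) * edist q (p s) < edist q (p c) ->
  edist q (p m) <= (1 - eps/4/4) * edist q (p c) ->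
  (forall x, (1 <= x <= n)%N ->
     edist q (p x) <= (1 - eps/4/4) * edist q (p c) -> (m <= x)%N) ->
  gedge p n (eps/4) c m.
Proof.
move=> /andP[e0 e1] G /andP[hc1 hcm] hmn /andP[hs1 hsn] Dc0 HDs hm hmin.
have Ds0 := edist_ge0 q (p s).
have hDs : edist q (p s) <= (1 - eps/2) * edist q (p c).
  have h1 : (1 - eps/2) * ((1 + eps) * edist q (p s)) <= (1 - eps/2) * edist q (p c).
    by rewrite ler_wpM2l ?ltW //; lra.
  have h2 : 0 <= eps * (1 - eps) * edist q (p s).
    by rewrite mulr_ge0 // mulr_ge0 //; lra.
  have -> : edist q (p s) = (1 - eps/2) * ((1 + eps) * edist q (p s)) - eps * (1 - eps) * edist q (p s) / 2 by field.
  lra.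
have ecp : 0 <= eps * edist q (p c) by rewrite mulr_ge0 // ltW.
have hsm : (m <= s)%N by apply: hmin; [rewrite hs1 hsn | nra].
have hm2 : (2 <= m)%N by apply: leq_ltn_trans hcm.
have hrad : radius p n m.-1 = distP p m.-1 (p m).
  by rewrite /radius prednK ?(leq_trans _ hm2) // ifT // (leq_ltn_trans (leq_pred m) _) // (leq_trans _ hmn).
have hgr := (proj2 G) m s hm2 (introT andP (conj hsm hsn)).
have hm1' : (1 <= m.-1)%N by rewrite -ltnS prednK // (leq_trans _ hm2).
have [k [/andP [hk1 hkm] hk]] := @distP_att R d p m.-1 (p s) hm1'.
have hkq : (1 - eps/4/4) * edist q (p c) < edist q (p k).
  rewrite ltNge; apply/negP => h.
  have := hmin k; rewrite hk1 (leq_trans hkm (leq_trans (leq_pred m) hmn)) => /(_ isT h).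
  by rewrite leqNgt (leq_ltn_trans hkm) // ltn_predL (leq_trans _ hm2).
have htri := edist_tri q (p s) (p k).
rewrite (edist_sym (p s) (p k)) -hk in htri.
have hup := edist_tri (p c) q (p m).
rewrite (edist_sym (p c) q) in hup.
split; first by rewrite hm2 hmn.
split; first by rewrite hc1 hcm.
rewrite hrad ler_pdivlMr; last by lra.
nra.
Qed.

Lemma inv_lem (p : nat -> point) n (eps : R) q (j s : nat) :
  0 < eps < 1 -> greedy_perm p n -> (1 <= s <= n)%N ->
  (1 + eps) * edist q (p s) < edist q (p j) ->
  forall c, visited p n (eps/4) q c -> edist q (p j) <= edist q (p c) ->
  forall l, (1 <= l)%N -> (l < c)%N -> (l <= n)%N ->
  (1 - eps/4/4) * edist q (p c) < edist q (p l).
Proof.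
move=> /andP[e0 e1] G hs HD.
have Ds0 := edist_ge0 q (p s).
have D0 : 0 < edist q (p j) by nra.
move=> c0; elim => [|c k Hv IH Hg Himp Hfirst] HDk l hl1 hlc hln.
  by move: (leq_trans hl1 hlc).
rewrite /improving in Himp.
have Dk0 := edist_ge0 q (p k).
have hDck : edist q (p k) <= edist q (p c) by nra.
have IH' := IH (le_trans HDk hDck).
have Dc0 : 0 < edist q (p c) by lra.
rewrite ltNge; apply/negP => hl.
case: (ltngtP l c) => [hlt|hgt|heq].
- have := IH' l hl1 hlt hln; nra.
- case: Hg => [_ [/andP [hc1 hck] _]].
  have exP : exists x, (1 <= x <= n)%N && (edist q (p x) <= (1 - eps/4/4) * edist q (p c)).
    by exists l; rewrite hl1 hln /=; nra.
  case: (ex_minnP exP) => m /andP[/andP [hm1 hmn] hmd] hmin.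
  have hml : (m <= l)%N by apply: hmin; rewrite hl1 hln /=; nra.
  have hcm : (c < m)%N.
    case: (ltngtP m c) => [hmc|//|hmc].
    - by have := IH' m hm1 hmc hmn; nra.
    - by rewrite hmc in hmd; nra.
  have hge : gedge p n (eps/4) c m.
    have HDc : (1 + eps) * edist q (p s) < edist q (p c) by lra.
    apply: (key (s:=s)); [by rewrite e0 e1 | exact G | by rewrite hc1 hcm
      | exact hmn | exact hs | exact Dc0 | exact HDc | exact hmd | ].
    by move=> x /andP[hx1 hxn] hx; apply: hmin; rewrite hx1 hxn hx.
  by apply: (Hfirst m (leq_ltn_trans hml hlc) hge).
- by rewrite heq in hl; nra.
Qed.

End Main.

Theorem claim4p5 (R : realType) (d : nat) (p : nat -> 'rV[R]_d) (n : nat)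
    (eps : R) (q : 'rV[R]_d) (i j : nat) :
  (1 <= d)%N -> (2 <= n)%N -> 0 < eps < 1 ->
  greedy_perm p n ->
  inspected p n (eps / 4) q j i ->
  edist q (p j) < edist q (p i) ->
  radius p n i < (eps / 8) * edist q (p j) ->
  edist q (p j) <= (1 + eps) * distP p n q.
Proof.
move=> hd hn heps G [Hv [Hg Hfirst]] Hji Hr.
have /andP [e0 e1] := heps.
have hn1 : (1 <= n)%N by apply: leq_trans hn.
have [s [hs hDs]] := @distP_att R d p n q hn1.
rewrite hDs (edist_sym (p s) q) leNgt; apply/negP => H.
have Ds0 := edist_ge0 q (p s).
have D0 : 0 < edist q (p j) by nra.
have Inv := inv_lem heps G hs H Hv (lexx _).
have Hg' := Hg.
case: Hg' => [/andP [hi2 hin] [/andP [hj1 hji] _]].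
have [l [/andP [hl1 hli] hl]] : exists l, (1 <= l <= i)%N /\ edist (p l) (p s) <= radius p n i.
  have hi1 : (1 <= i)%N by apply: leq_trans hi2.
  case: (leqP s i) => hsi.
    exists s; rewrite hsi; case/andP: hs => -> _; split => //.
    rewrite edist_xx /radius; case: ifP => // _.
    have [k [_ ->]] := @distP_att R d p i (p i.+1) hi1.
    exact: edist_ge0.
  rewrite /radius; case: ifP => hin'; last first.
    by exfalso; case/andP: hs => _ h; move: (leq_trans hsi h); rewrite hin'.
  have hgr := (proj2 G) i.+1 s (leq_trans hi2 (leqnSn i)) (introT andP (conj hsi (proj2 (andP hs)))).
  rewrite /= in hgr.
  have [k [hk hke]] := @distP_att R d p i (p s) hi1.
  by exists k; split => //; rewrite -hke.
have hlq : edist q (p l) <= (1 - eps/4/4) * edist q (p j).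
  have := edist_tri q (p s) (p l); rewrite (edist_sym (p s) (p l)).
  have : eps * edist q (p j) >= 0 by rewrite mulr_ge0 // ltW.
  nra.
have exP : exists x, (1 <= x <= n)%N && (edist q (p x) <= (1 - eps/4/4) * edist q (p j)).
  by exists l; rewrite hl1 (leq_trans hli hin) hlq.
case: (ex_minnP exP) => m /andP[/andP [hm1 hmn] hmd] hmin.
have hml : (m <= l)%N by apply: hmin; rewrite hl1 (leq_trans hli hin) hlq.
have hjm : (j < m)%N.
  case: (ltngtP m j) => [hmj|//|hmj].
  - by have := Inv m hm1 hmj hmn; nra.
  - by rewrite hmj in hmd; nra.
have hmi : (m < i)%N.
  rewrite ltn_neqAle (leq_trans hml hli) andbT; apply/eqP => hmi.
  by rewrite hmi in hmd; nra.
have hge : gedge p n (eps/4) j m.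
  have HDc : (1 + eps) * edist q (p s) < edist q (p j) by lra.
  apply: (key (s:=s)); [by rewrite e0 e1 | exact G | by rewrite hj1 hjm
    | exact hmn | exact hs | exact D0 | exact HDc | exact hmd | ].
  by move=> x /andP[hx1 hxn] hx; apply: hmin; rewrite hx1 hxn hx.
exact: (Hfirst m hmi hge).
Qed.
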